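(* Let $n\ge3$. (1) For any $\mathbf{p}\in\mathbb{Q}^{n!}$, there exists $\widehat{\mathbf{p}}\in\mathbb{N}_0^{n!}$ such that for every $\mathbf{w}\in\overline{W}$, the vectors $Q_{\widehat{\mathbf{p}}}\mathbf{w}$ and $Q_{\mathbf{p}}\mathbf{w}$ lie in the same face. (2) For any $\mathbf{p}\in\mathbb{Q}^{n!}$, there exists $\widetilde{\mathbf{p}}\in\mathbb{Q}^{n!}$ with $\widetilde{p}_\ell\ge 0$ for all $\ell$ and $\sum_{\ell=1}^{n!}\widetilde{p}_\ell=1$ such that for every $\mathbf{w}\in\overline{W}$, the vectors $Q_{\widetilde{\mathbf{p}}}\mathbf{w}$ and $Q_{\mathbf{p}}\mathbf{w}$ lie in the same face.
   Context: Work over $\mathbb{Q}$; $\mathbb{N}_0$ denotes the nonnegative integers. Let $\overline{W}=\{\mathbf{x}\in\mathbb{Q}^n : x_1\ge x_2\ge\cdots\ge x_n,\ x_1+\cdots+x_n=0\}$. Label the permutations of $S_n$ as $\sigma_1,\dots,\sigma_{n!}$ (lexicographically in one-line notation), let $R_\ell$ be the $n\times n$ permutation matrix with $R_\ell(i,j)=1$ iff $\sigma_\ell(j)=i$, and for $\mathbf{p}\in\mathbb{Q}^{n!}$ let $Q_{\mathbf{p}}=\sum_{\ell=1}^{n!}p_\ell R_\ell$. Two vectors $\mathbf{x},\mathbf{y}\in\mathbb{Q}^n$ lie in the same face (of the braid arrangement) iff for all $i,j\in\{1,\dots,n\}$ we have $x_i>x_j\iff y_i>y_j$ and $x_i=x_j\iff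 y_i=y_j$, i.e. they induce the same (possibly non-strict) ranking of the coordinates. *)

(* Defs.v *)
From mathcomp Require Import all_boot all_order all_algebra all_fingroup.
Set Implicit Arguments. Unset Strict Implicit. Unset Printing Implicit Defensive.
Import Order.TTheory GRing.Theory Num.Theory.
Local Open Scope ring_scope.

(* Coordinates of Q^(n!) are indexed directly by the permutations of 'S_n
   (the lexicographic labeling sigma_1..sigma_{n!} is just a bijection). *)

Definition Rperm (n : nat) (s : 'S_n) : 'M[rat]_n :=
  \matrix_(i < n, j < n) (if s j == i then 1 else 0).

Definition Qp (n : nat) (p : {ffun 'S_n -> rat}) : 'M[rat]_n :=
  \sum_(s : 'S_n) p s *: Rperm s.

Definition in_Wbar (n : nat) (x : 'cV[rat]_n) : Prop :=
  (forall i j : 'I_n, (i <= j)%N -> x j 0 <= x i 0) /\ \sum_(i < n) x i 0 = 0.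

Definition same_face (n : nat) (x y : 'cV[rat]_n) : Prop :=
  forall i j : 'I_n, (x i 0 > x j 0 <-> y i 0 > y j 0) /\ (x i 0 = x j 0 <-> y i 0 = y j 0).

(* Main.v *)
Require Import Defs.
From mathcomp Require Import all_boot all_order all_algebra all_fingroup.
From mathcomp Require Import ring.
Import Order.TTheory GRing.Theory Num.Theory.
Local Open Scope ring_scope.

Lemma Rperm_mul n (s : 'S_n) (w : 'cV[rat]_n) i :
  (Rperm s *m w) i 0 = w ((s^-1)%g i) 0.
Proof.
rewrite !mxE (bigD1 ((s^-1)%g i)) //= !mxE permKV eqxx mul1r.
rewrite big1 ?addr0 // => j hj; rewrite !mxE.
by rewrite (can2_eq (permK s) (permKV s)) (negbTE hj) mul0r.
Qed.

Lemma sumR_mul n (w : 'cV[rat]_n) : \sum_(i < n) w i 0 = 0 ->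
  (\sum_(s : 'S_n) Rperm s) *m w = 0.
Proof.
move=> hw; rewrite mulmx_suml; apply/matrixP => i k.
rewrite (ord1 k) summxE mxE.
under eq_bigr => s _ do rewrite Rperm_mul.
rewrite (reindex_inj invg_inj) /=.
under eq_bigr => s _ do rewrite invgK.
set f := fun i : 'I_n => \sum_(s : 'S_n) w (s i) 0.
have fc : forall j, f j = f i.
  move=> j; rewrite /f; have hi := (@mulgI _ (tperm i j)); rewrite (reindex_inj hi) /=.
  by apply: eq_bigr => s _; rewrite permM tpermR.
have : \sum_(j < n) f j = 0.
  rewrite /f exchange_big /=; apply: big1 => s _.
  by rewrite -[RHS]hw [RHS](reindex_inj (@perm_inj _ s)).
rewrite (eq_bigr (fun _ => f i)); last by move=> j _; rewrite fc.
rewrite sumr_const card_ord => /eqP; rewrite mulrn_eq0 => /orP[/eqP hn|/eqP //].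
by have := ltn_ord i; rewrite ltnNge (leq_trans (eq_leq hn) (leq0n _)).
Qed.

Lemma Qp_affine n (p q : {ffun 'S_n -> rat}) (a c : rat) (w : 'cV[rat]_n) :
  (forall s, q s = a * p s + c) -> \sum_(i < n) w i 0 = 0 ->
  Qp q *m w = a *: (Qp p *m w).
Proof.
move=> hq hw; rewrite /Qp.
rewrite (eq_bigr (fun s => a *: (p s *: Rperm s) + c *: Rperm s)); last first.
  by move=> s _; rewrite hq scalerDl scalerA.
rewrite big_split /= -scaler_sumr -scaler_sumr mulmxDl -!scalemxAl sumR_mul //.
by rewrite scaler0 addr0.
Qed.

Lemma same_face_scale n (a : rat) (x : 'cV[rat]_n) : 0 < a -> same_face (a *: x) x.
Proof.
move=> ha i j; rewrite !mxE; split.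
  by rewrite ltr_pM2l //.
split=> [h|->] //; apply: (mulfI (x := a)) => //; by rewrite gt_eqF.
Qed.

Lemma key n (p : {ffun 'S_n -> rat}) :
  exists (a c : rat) (ph : {ffun 'S_n -> nat}), 0 < a /\ forall s, (ph s)%:R = a * p s + c.
Proof.
pose m s : int := numq (p s) * \prod_(t | t != s) denq (p t).
pose D : int := \prod_t denq (p t).
pose C : int := \sum_s `|m s|.
exists D%:~R, C%:~R, [ffun s => absz (m s + C)]; split.
  rewrite ltr0z /D; apply: prodr_gt0 => t _; exact: denq_gt0.
move=> s; rewrite ffunE.
have hC : `|m s| <= C by rewrite /C (bigD1 s) //= lerDl sumr_ge0.
have h0 : 0 <= m s + C.
  rewrite -lerBlDr sub0r lerNl; apply: le_trans hC; rewrite -normrN; exact: ler_norm.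
rewrite -[(absz (m s + C))%:R]/((absz (m s + C))%:~R) gez0_abs // rmorphD /=.
congr (_ + _); rewrite /D (bigD1 s) //= /m !intrM numqE.
ring.
Qed.

Theorem proposition3p8 (n : nat) (hn : (3 <= n)%N) :
  (forall p : {ffun 'S_n -> rat},
     exists ph : {ffun 'S_n -> nat},
       forall w : 'cV[rat]_n, in_Wbar w ->
         same_face (Qp [ffun s => (ph s)%:R] *m w) (Qp p *m w)) /\
  (forall p : {ffun 'S_n -> rat},
     exists pt : {ffun 'S_n -> rat},
       (forall s, 0 <= pt s) /\ \sum_(s : 'S_n) pt s = 1 /\
       forall w : 'cV[rat]_n, in_Wbar w ->
         same_face (Qp pt *m w) (Qp p *m w)).
Proof.
split=> p; have [a [c [ph [ha hph]]]] := @key _ p.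
  exists ph => w [_ hw].
  rewrite (@Qp_affine _ p _ a c) //; first exact: same_face_scale.
  by move=> s; rewrite ffunE.
pose S := \sum_(s : 'S_n) ((ph s)%:R + 1 : rat).
have hS : 0 < S.
  rewrite /S (bigD1 1%g) //=.
  have h1 : (0 : rat) < (ph 1%g)%:R + 1 by rewrite ltr_wpDl.
  apply: lt_le_trans h1 _; rewrite lerDl; apply: sumr_ge0 => *; exact: addr_ge0.
exists [ffun s => ((ph s)%:R + 1) / S]; split; [|split].
- by move=> s; rewrite ffunE divr_ge0 ?addr_ge0 // ltW.
- rewrite (eq_bigr (fun s => ((ph s)%:R + 1) / S)); last by move=> s _; rewrite ffunE.
  by rewrite -mulr_suml divff // gt_eqF.
- move=> w [_ hw].
  rewrite (@Qp_affine _ p _ (a / S) ((c + 1) / S)) //; first by apply: same_face_scale; rewrite divr_gt0.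
  move=> s; rewrite ffunE hph; field; by rewrite gt_eqF.
Qed.
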